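(* Let $N=1$, assume (H-EL), (H-R), $e_*=+\infty$, and that $Q(s)\to-S\in(0,+\infty)$ and $sQ'(s)\to0$ as $s\to+\infty$. Let $(u_{0k})\subset\mathcal A$ with $u_{0k}\to+\infty$, let $u_k$ be the solution of $(P_{u_{0k}})$ with $\operatorname{supp}u_k=[-\bar r_k,\bar r_k]$. Then $\mu(u_{0k})\to+\infty$, $$u_{0k}^4\sim\tfrac{9|S|}{32}\mu(u_{0k})^2,\qquad \bar r_k^4\sim\tfrac{9}{8|S|}\mu(u_{0k})^2\quad(k\to\infty),$$ and $u_{0k}^{-1}u_k(\bar r_k y)\to1-y^2$ in $C^2_{loc}((-1,1))$.
   Context: Hypothesis (H-EL): $Q\in C^1((0,+\infty))$, $Q\equiv0$ on $(-\infty,0]$, $\inf Q>-\infty$, $Q(u)\sim Au^{1-m}$ as $u\to0^+$ with $A>0$, $1<m<3$, and $|sQ'(s)|\le CQ(s)$ for small $s>0$. $R(s)=Q(s)/s$. (H-R): $R'\ne0$ on $(0,\delta)\cup(\delta^{-1},\infty)$ for some $\delta\in(0,1)$. $e_*=+\infty$ means $R$ attains no minimum on $(0,\infty)$. $(P_{s})$: $-u''+Q'(u)=R(s)$ in $\{u>0\}$, $u(0)=s$, $u'(0)=0$. $\mathcal A=\{s>0: R'(s)<0,\ R(t)>R(s)\ \forall t\in(0,s)\}$; for $s\in\mathcal A$ the solution $u_s$ of $(P_s)$ is even with compact support $[-\bar r_s,\bar r_s]$, and $\mu(s)=2\int_0^{\bar r_s}u_s$ is its mass. *)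

(* Defs.v *)
From Stdlib Require Import Reals Lra.
From Coquelicot Require Import Coquelicot.
Open Scope R_scope.

Definition Rq (Q : R -> R) (s : R) : R := Q s / s.

Definition H_EL (Q : R -> R) (A m : R) : Prop :=
  (forall x, 0 < x -> ex_derive Q x /\ continuous (Derive Q) x) /\
  (forall x, x <= 0 -> Q x = 0) /\
  (exists M, forall x, M <= Q x) /\
  0 < A /\ 1 < m < 3 /\
  filterlim (fun u => Q u / (A * Rpower u (1 - m))) (at_right 0) (locally 1) /\
  (exists C d, 0 < d /\ forall s, 0 < s < d -> Rabs (s * Derive Q s) <= C * Q s).

Definition H_R (Q : R -> R) : Prop :=
  exists d, 0 < d < 1 /\
    forall s, (0 < s < d \/ / d < s) -> Derive (Rq Q) s <> 0.

(* e_* = +oo : R attains no minimum on (0,+oo) *)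
Definition estar_infinite (Q : R -> R) : Prop :=
  ~ (exists s0, 0 < s0 /\ forall s, 0 < s -> Rq Q s0 <= Rq Q s).

Definition setA (Q : R -> R) (s : R) : Prop :=
  0 < s /\ Derive (Rq Q) s < 0 /\ (forall t, 0 < t < s -> Rq Q t > Rq Q s).

Definition is_sol_P (Q : R -> R) (s : R) (u : R -> R) (rb : R) : Prop :=
  0 < rb /\
  (forall x, continuous u x) /\
  (forall x, -rb < x < rb ->
     0 < u x /\ ex_derive u x /\ ex_derive (Derive u) x /\
     - Derive_n u 2 x + Derive Q (u x) = Rq Q s) /\
  (forall x, rb <= Rabs x -> u x = 0) /\
  u 0 = s /\ Derive u 0 = 0.

Definition mass (u : R -> R) (rb : R) : R := 2 * RInt u 0 rb.

(* Main.v *)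
Require Import Defs.
From Stdlib Require Import Reals Lra Psatz.
From Coquelicot Require Import Coquelicot.
Open Scope R_scope.

Lemma loc_int a b x : a < x < b -> locally x (fun y => a < y < b).
Proof.
  intros [H1 H2].
  assert (He : 0 < Rmin (x - a) (b - x)) by (apply Rmin_case; lra).
  exists (mkposreal _ He). intros y Hy.
  change (Rabs (y - x) < Rmin (x - a) (b - x)) in Hy.
  apply Rabs_def2 in Hy. destruct Hy as [Hy1 Hy2].
  pose proof (Rmin_l (x-a) (b-x)). pose proof (Rmin_r (x-a) (b-x)). lra.
Qed.

Lemma cpt_of_ex_derive (f : R -> R) x : ex_derive f x -> continuity_pt f x.
Proof.
  intro H. apply continuity_pt_filterlim. apply (ex_derive_continuous f x H).
Qed.

Lemma local_decrease (f : R -> R) x l : is_derive f x l -> l < 0 ->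
  exists e, 0 < e /\ forall t, x < t < x + e -> f t < f x.
Proof.
  intros H Hl. apply is_derive_Reals in H.
  assert (He : 0 < - l / 2) by lra.
  destruct (H _ He) as [d Hd].
  exists d. split. apply cond_pos. intros t Ht.
  assert (Hh : t - x <> 0) by lra.
  assert (Ha : Rabs (t - x) < d) by (rewrite Rabs_pos_eq; lra).
  specialize (Hd _ Hh Ha). replace (x + (t - x)) with t in Hd by ring.
  apply Rabs_def2 in Hd. destruct Hd as [Hd1 Hd2].
  assert (Hq : (f t - f x) / (t - x) < 0) by lra.
  assert (0 < t - x) by lra.
  destruct (Rlt_or_le (f t) (f x)) as [?|Hc]; auto.
  exfalso. assert (0 <= (f t - f x) / (t - x)).
  { apply Rmult_le_pos; [lra| left; apply Rinv_0_lt_compat; lra]. }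
  lra.
Qed.

Lemma mvt_le (h : R -> R) a b C : a <= b ->
  (forall x, a <= x <= b -> ex_derive h x) ->
  (forall x, a <= x <= b -> Derive h x <= C) -> h b - h a <= C * (b - a).
Proof.
  intros Hab Hd HC.
  destruct (MVT_gen h a b (Derive h)) as [c [Hc Heq]].
  - intros x Hx. rewrite Rmin_left in Hx by lra. rewrite Rmax_right in Hx by lra.
    apply Derive_correct, Hd; lra.
  - intros x Hx. rewrite Rmin_left in Hx by lra. rewrite Rmax_right in Hx by lra.
    apply cpt_of_ex_derive, Hd; lra.
  - rewrite Rmin_left in Hc by lra. rewrite Rmax_right in Hc by lra.
    rewrite Heq. apply Rmult_le_compat_r; [lra| apply HC; lra].
Qed.

Lemma mvt_ge (h : R -> R) a b C : a <= b ->
  (forall x, a <= x <= b -> ex_derive h x) ->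
  (forall x, a <= x <= b -> C <= Derive h x) -> C * (b - a) <= h b - h a.
Proof.
  intros Hab Hd HC.
  destruct (MVT_gen h a b (Derive h)) as [c [Hc Heq]].
  - intros x Hx. rewrite Rmin_left in Hx by lra. rewrite Rmax_right in Hx by lra.
    apply Derive_correct, Hd; lra.
  - intros x Hx. rewrite Rmin_left in Hx by lra. rewrite Rmax_right in Hx by lra.
    apply cpt_of_ex_derive, Hd; lra.
  - rewrite Rmin_left in Hc by lra. rewrite Rmax_right in Hc by lra.
    rewrite Heq. apply Rmult_le_compat_r; [lra| apply HC; lra].
Qed.

Lemma cpt_eps (f : R -> R) x : continuity_pt f x -> forall eps, 0 < eps ->
  exists d, 0 < d /\ forall t, Rabs (t - x) < d -> Rabs (f t - f x) < eps.
Proof.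
  intros H eps He. apply continuity_pt_locally with (eps := mkposreal _ He) in H.
  destruct H as [d Hd]. exists d. split. apply cond_pos.
  intros t Ht. apply (Hd t). exact Ht.
Qed.

Lemma first_hit (f : R -> R) a b c : a < b ->
  (forall x, a <= x <= b -> continuity_pt f x) -> f a < c -> c <= f b ->
  exists y, a < y <= b /\ f y = c /\ forall z, a <= z < y -> f z < c.
Proof.
  intros Hab Hc Ha Hb.
  set (E := fun x => a <= x <= b /\ forall z, a <= z <= x -> f z < c).
  assert (HB : bound E) by (exists b; intros x [Hx _]; lra).
  assert (HEa : E a).
  { split. lra. intros z Hz. replace z with a by lra. auto. }
  assert (HE : exists x, E x) by (exists a; exact HEa).
  destruct (completeness E HB HE) as [y [Hub Hlub]].
  assert (Hay : a <= y) by (apply Hub; exact HEa).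
  assert (Hyb : y <= b) by (apply Hlub; intros x [Hx _]; lra).
  assert (Hbelow : forall z, a <= z < y -> f z < c).
  { intros z Hz.
    destruct (Classical_Prop.classic (exists x, E x /\ z <= x)) as [[x [Ex Hzx]]|Hn].
    - apply (proj2 Ex). lra.
    - exfalso. assert (y <= z).
      { apply Hlub. intros x Ex. destruct (Rle_or_lt x z); auto.
        exfalso. apply Hn. exists x. split; auto; lra. }
      lra. }
  assert (Hfy : f y = c).
  { destruct (Rtotal_order (f y) c) as [Hlt|[Heq|Hgt]]; auto; exfalso.
    -
      assert (Hyb' : y < b) by (destruct (Req_dec y b); [subst; lra| lra]).
      destruct (cpt_eps f y (Hc y (conj Hay Hyb)) (c - f y)) as [d [Hd Hdd]]; [lra|].
      set (y' := Rmin (y + d/2) b).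
      assert (Hy'1 : y < y') by (unfold y'; apply Rmin_case; lra).
      assert (Hy'2 : y' <= b) by (unfold y'; apply Rmin_r).
      assert (Hy'3 : y' <= y + d/2) by (unfold y'; apply Rmin_l).
      assert (E y').
      { split. lra. intros z Hz. destruct (Rlt_or_le z y).
        - apply Hbelow; lra.
        - assert (Rabs (z - y) < d) by (rewrite Rabs_pos_eq; lra).
          specialize (Hdd z H0). apply Rabs_def2 in Hdd. lra. }
      specialize (Hub y' H). lra.
    - assert (Hay' : a < y) by (destruct (Req_dec a y); [subst; lra| lra]).
      destruct (cpt_eps f y (Hc y (conj Hay Hyb)) (f y - c)) as [d [Hd Hdd]]; [lra|].
      set (z := Rmax (y - d/2) a).
      assert (Hz1 : z < y) by (unfold z; apply Rmax_case; lra).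
      assert (Hz2 : a <= z) by (unfold z; apply Rmax_r).
      assert (Hz3 : y - d/2 <= z) by (unfold z; apply Rmax_l).
      specialize (Hbelow z (conj Hz2 Hz1)).
      assert (Rabs (z - y) < d) by (rewrite Rabs_left; lra).
      specialize (Hdd z H). apply Rabs_def2 in Hdd. lra. }
  exists y. split; [|split; auto].
  split; auto. destruct (Req_dec a y); [subst; lra| lra].
Qed.

Lemma mvt_lt (h : R -> R) a b : a < b ->
  (forall x, a <= x <= b -> ex_derive h x) ->
  (forall x, a <= x <= b -> Derive h x < 0) -> h b < h a.
Proof.
  intros Hab Hd HC.
  destruct (MVT_gen h a b (Derive h)) as [c [Hc Heq]].
  - intros x Hx. rewrite Rmin_left in Hx by lra. rewrite Rmax_right in Hx by lra.
    apply Derive_correct, Hd; lra.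
  - intros x Hx. rewrite Rmin_left in Hx by lra. rewrite Rmax_right in Hx by lra.
    apply cpt_of_ex_derive, Hd; lra.
  - rewrite Rmin_left in Hc by lra. rewrite Rmax_right in Hc by lra.
    assert (Derive h c < 0) by (apply HC; lra). nra.
Qed.

Lemma const_on (h : R -> R) a b : a <= b ->
  (forall x, a <= x <= b -> is_derive h x 0) -> h b = h a.
Proof.
  intros Hab Hd.
  assert (He : forall x, a <= x <= b -> ex_derive h x) by (intros x Hx; exists 0; auto).
  assert (HD : forall x, a <= x <= b -> Derive h x = 0) by (intros x Hx; apply is_derive_unique; auto).
  pose proof (mvt_le h a b 0 Hab He (fun x Hx => Req_le _ _ (HD x Hx))).
  pose proof (mvt_ge h a b 0 Hab He (fun x Hx => Req_le _ _ (eq_sym (HD x Hx)))).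
  lra.
Qed.

Lemma cont_of_sol (Q : R -> R) s (u : R -> R) r : is_sol_P Q s u r -> forall x, continuity_pt u x.
Proof.
  intros [_ [Hc _]] x. apply continuity_pt_filterlim, Hc.
Qed.

Lemma sol_facts (Q : R -> R) s (u : R -> R) r :
  (forall x, 0 < x -> ex_derive Q x) ->
  is_sol_P Q s u r -> setA Q s -> 0 < Q s ->
  (forall x, -r < x < r -> (Derive u x)^2 = 2 * (Q (u x) - Q s / s * u x)) /\
  (forall x, -r < x < r -> u x <= s) /\
  (forall x, 0 < x < r -> Derive u x < 0).
Proof.
  intros HQd Hsol HA HQs.
  pose proof (cont_of_sol _ _ _ _ Hsol) as Hcu.
  destruct Hsol as [Hr [_ [Hode [Hout [H0 Hd0]]]]].
  destruct HA as [Hs [HR' HRlt]].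
  set (lam := Q s / s).
  assert (Hode' : forall x, -r < x < r ->
     0 < u x /\ ex_derive u x /\ ex_derive (Derive u) x /\
     Derive (Derive u) x = Derive Q (u x) - lam).
  { intros x Hx. destruct (Hode x Hx) as [H1 [H2 [H3 H4]]]. repeat split; auto.
    change (Derive_n u 2 x) with (Derive (Derive u) x) in H4. unfold Rq in H4. unfold lam. lra. }
  assert (HE : forall x, -r < x < r -> (Derive u x)^2 = 2 * (Q (u x) - lam * u x)).
  { set (E := fun x => Derive u x ^ 2 / 2 - Q (u x) + lam * u x).
    assert (HdE : forall y, -r < y < r -> is_derive E y 0).
    { intros y Hy. destruct (Hode' y Hy) as [Hp [Hdu [Hddu Heq]]].
      assert (HQy : ex_derive Q (u y)) by (apply HQd; auto).
      eapply is_derive_ext. intros t. reflexivity.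
      replace 0 with (Derive u y * Derive (Derive u) y - Derive Q (u y) * Derive u y + lam * Derive u y)
        by (rewrite Heq; ring).
      unfold E. auto_derive. tauto.
      set (a := Derive (fun x => Derive u x) y). set (b := Derive (fun x => u x) y).
      set (c := Derive (fun x => Q x) (u y)). change (Derive u y) with b.
      change (Derive Q (u y)) with c. change (Derive (Derive u) y) with a. field. }
    assert (HE0 : E 0 = 0).
    { unfold E. rewrite Hd0, H0. unfold lam. field. lra. }
    intros x Hx.
    assert (E x = 0).
    { destruct (Rle_or_lt 0 x).
      - rewrite <- HE0. apply const_on; auto. intros y Hy; apply HdE; lra.
      - rewrite <- HE0. symmetry. apply const_on; [lra|]. intros y Hy; apply HdE; lra. }
    unfold E in H. lra. }
  assert (Hlam : Rq Q s = lam) by reflexivity.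
  assert (HRd : is_derive (Rq Q) s ((Derive Q s * s - Q s) / s ^ 2)).
  { unfold Rq. auto_derive. split; [apply HQd; auto|split; [lra|auto]].
    set (c := Derive (fun x => Q x) s). change (Derive Q s) with c.
    match goal with |- ?a = ?b => change (@eq R a b) end. field. lra. }
  assert (HR'eq : Derive (Rq Q) s = (Derive Q s * s - Q s) / s ^ 2) by (apply is_derive_unique; auto).
  assert (HLe : forall x, -r < x < r -> u x <= s).
  { intros x2 Hx2. destruct (Rle_or_lt (u x2) s) as [?|Hgt]; auto. exfalso.
    rewrite <- HR'eq in HRd.
    destruct (local_decrease _ _ _ HRd HR') as [e [He Hdec]].
    set (t0 := s + Rmin e (u x2 - s) / 2).
    assert (Hm1 : Rmin e (u x2 - s) <= e) by apply Rmin_l.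
    assert (Hm2 : Rmin e (u x2 - s) <= u x2 - s) by apply Rmin_r.
    assert (Hm3 : 0 < Rmin e (u x2 - s)) by (apply Rmin_case; lra).
    destruct (IVT_gen u 0 x2 t0) as [x3 [Hx3 Hux3]].
    { intros x; apply Hcu. }
    { rewrite H0. rewrite Rmin_left by lra. rewrite Rmax_right by lra. unfold t0; lra. }
    assert (Hx3' : -r < x3 < r).
    { destruct (Rle_or_lt 0 x2).
      - rewrite Rmin_left, Rmax_right in Hx3 by lra. lra.
      - rewrite Rmin_right, Rmax_left in Hx3 by lra. lra. }
    pose proof (HE x3 Hx3') as Hen. rewrite Hux3 in Hen.
    assert (Hrt : Rq Q t0 < Rq Q s) by (apply Hdec; unfold t0; lra).
    assert (Ht0 : 0 < t0) by (unfold t0; lra).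
    assert (Q t0 = t0 * Rq Q t0) by (unfold Rq; field; lra).
    rewrite Hlam in Hrt.
    assert (Q t0 - lam * t0 < 0).
    { rewrite H. replace (t0 * Rq Q t0 - lam * t0) with (t0 * (Rq Q t0 - lam)) by ring.
      nra. }
    pose proof (pow2_ge_0 (Derive u x3)). lra. }
  repeat split; auto.
  intros x Hx.
  destruct (Hode' 0 ltac:(lra)) as [_ [_ [Hdd0 Heq0]]].
  rewrite H0 in Heq0.
  assert (Hu''0 : Derive (Derive u) 0 < 0).
  { rewrite Heq0. unfold lam.
    assert (Derive Q s - Q s / s = s * Derive (Rq Q) s) by (rewrite HR'eq; field; lra).
    rewrite H. nra. }
  destruct (local_decrease _ _ _ (Derive_correct _ _ Hdd0) Hu''0) as [e [He Hdec]].
  rewrite Hd0 in Hdec. rewrite Rplus_0_l in Hdec.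
  destruct (Rlt_or_le x e) as [Hxe|Hxe]; [apply Hdec; lra|].
  set (rho := Rmin e r / 2).
  assert (Hrho1 : Rmin e r <= e) by apply Rmin_l.
  assert (Hrho2 : Rmin e r <= r) by apply Rmin_r.
  assert (Hrho3 : 0 < Rmin e r) by (apply Rmin_case; lra).
  destruct (Rlt_or_le (Derive u x) 0) as [?|Hge]; auto. exfalso.
  destruct (first_hit (Derive u) rho x 0) as [y [Hy [Hy0 Hybel]]].
  - unfold rho; lra.
  - intros z Hz. apply cpt_of_ex_derive. apply Hode'; unfold rho in Hz; lra.
  - apply Hdec; unfold rho; lra.
  - auto.
  - assert (Hyr : -r < y < r) by (unfold rho in Hy; lra).
    destruct (Hode' y Hyr) as [Hpos _].
    assert (Huy : u y = s).
    { destruct (Rle_lt_or_eq_dec _ _ (HLe y Hyr)) as [Hlt|]; auto. exfalso.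
      pose proof (HE y Hyr) as Hen. rewrite Hy0 in Hen.
      specialize (HRlt (u y) (conj Hpos Hlt)). rewrite Hlam in HRlt.
      assert (Q (u y) = u y * Rq Q (u y)) by (unfold Rq; field; lra).
      assert (0 < Q (u y) - lam * u y).
      { rewrite H. replace (u y * Rq Q (u y) - lam * u y) with (u y * (Rq Q (u y) - lam)) by ring.
        apply Rmult_lt_0_compat; lra. }
      lra. }
    assert (H1 : u rho < u (rho / 2)).
    { apply mvt_lt. unfold rho; lra.
      - intros z Hz; apply Hode'; unfold rho in *; lra.
      - intros z Hz; apply Hdec; unfold rho in *; lra. }
    assert (H2 : u (rho / 2) <= s) by (apply HLe; unfold rho; lra).
    assert (H3 : u y - u rho <= 0 * (y - rho)).
    { apply mvt_le; [lra| |].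
      - intros z Hz; apply Hode'; unfold rho in *; lra.
      - intros z Hz. destruct (Req_dec z y) as [->|Hne]; [lra|]. left; apply Hybel; lra. }
    lra.
Qed.

Lemma refl_derivs (u : R -> R) r x :
  (forall y, -r < y < r -> ex_derive u y /\ ex_derive (Derive u) y) ->
  -r < x < r ->
  ex_derive (fun y => u (- y)) x /\ ex_derive (Derive (fun y => u (- y))) x /\
  Derive (fun y => u (- y)) x = - Derive u (- x) /\
  Derive (Derive (fun y => u (- y))) x = Derive (Derive u) (- x).
Proof.
  intros Hd Hx.
  assert (Hloc : locally (- x) (fun y => forall k, (k <= 2)%nat -> ex_derive_n u k y)).
  { apply filter_imp with (2 := loc_int (-r) r (-x) ltac:(lra)).
    intros y Hy k Hk. destruct (Hd y Hy) as [H1 H2].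
    destruct k as [|[|[|k]]]; simpl; auto; lia. }
  assert (Hloc1 : locally (- x) (fun y => forall k, (k <= 1)%nat -> ex_derive_n u k y)).
  { apply filter_imp with (2 := Hloc). intros y Hy k Hk. apply Hy. lia. }
  pose proof (ex_derive_n_comp_opp u 1 x Hloc1) as E1.
  pose proof (ex_derive_n_comp_opp u 2 x Hloc) as E2.
  pose proof (Derive_n_comp_opp u 1 x Hloc1) as D1.
  pose proof (Derive_n_comp_opp u 2 x Hloc) as D2.
  change (ex_derive (fun y => u (- y)) x) in E1.
  change (ex_derive (Derive (fun y => u (- y))) x) in E2.
  change (Derive (fun y => u (- y)) x = (-1)^1 * Derive u (- x)) in D1.
  change (Derive (Derive (fun y => u (- y))) x = (-1)^2 * Derive (Derive u) (- x)) in D2.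
  repeat split.
  - exact E1.
  - exact E2.
  - rewrite D1. ring.
  - rewrite D2. ring.
Qed.

Lemma refl_sol (Q : R -> R) s (u : R -> R) r :
  is_sol_P Q s u r -> is_sol_P Q s (fun y => u (- y)) r.
Proof.
  intros Hsol. pose proof (cont_of_sol _ _ _ _ Hsol) as Hcu.
  destruct Hsol as [Hr [Hc [Hode [Hout [H0 Hd0]]]]].
  assert (Hd : forall y, -r < y < r -> ex_derive u y /\ ex_derive (Derive u) y)
    by (intros y Hy; destruct (Hode y Hy) as [_ [? [? _]]]; auto).
  split; [auto|split; [|split; [|split; [|split]]]].
  - intros x. apply continuity_pt_filterlim.
    apply continuity_pt_comp; [apply continuity_pt_opp, continuity_pt_id| apply Hcu].
  - intros x Hx. destruct (refl_derivs u r x Hd Hx) as [E1 [E2 [D1 D2]]].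
    destruct (Hode (- x) ltac:(lra)) as [Hp [_ [_ Heq]]].
    repeat split; auto.
    change (Derive_n (fun y => u (- y)) 2 x) with (Derive (Derive (fun y => u (- y))) x).
    rewrite D2. exact Heq.
  - intros x Hx. apply Hout. rewrite Rabs_Ropp. auto.
  - simpl. rewrite Ropp_0. auto.
  - destruct (refl_derivs u r 0 Hd ltac:(lra)) as [_ [_ [D1 _]]].
    rewrite D1, Ropp_0, Hd0. ring.
Qed.

Lemma mvt_le' (h dh : R -> R) a b C : a <= b ->
  (forall x, a <= x <= b -> is_derive h x (dh x)) ->
  (forall x, a <= x <= b -> dh x <= C) -> h b - h a <= C * (b - a).
Proof.
  intros Hab Hd HC. apply mvt_le; auto.
  - intros x Hx. exists (dh x). auto.
  - intros x Hx. rewrite (is_derive_unique _ _ _ (Hd x Hx)). auto.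
Qed.

Lemma mvt_ge' (h dh : R -> R) a b C : a <= b ->
  (forall x, a <= x <= b -> is_derive h x (dh x)) ->
  (forall x, a <= x <= b -> C <= dh x) -> C * (b - a) <= h b - h a.
Proof.
  intros Hab Hd HC. apply mvt_ge; auto.
  - intros x Hx. exists (dh x). auto.
  - intros x Hx. rewrite (is_derive_unique _ _ _ (Hd x Hx)). auto.
Qed.

Lemma RInt_quad s k b : RInt (fun x => s - k * x ^ 2) 0 b = s * b - k * b ^ 3 / 3.
Proof.
  apply is_RInt_unique.
  replace (s * b - k * b ^ 3 / 3) with
    (minus ((fun x => s * x - k * x ^ 3 / 3) b) ((fun x => s * x - k * x ^ 3 / 3) 0)).
  2:{ unfold minus, plus, opp; simpl. field. }
  apply (is_RInt_derive (fun x => s * x - k * x ^ 3 / 3) (fun x => s - k * x ^ 2)).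
  - intros x _. auto_derive. auto. field.
  - intros x _. apply (continuity_pt_filterlim (fun x => s - k * x ^ 2) x).
    apply cpt_of_ex_derive. auto_derive. auto.
Qed.

Lemma ex_RInt_cont (u : R -> R) a b : (forall x, continuity_pt u x) -> ex_RInt u a b.
Proof.
  intros Hc. apply (ex_RInt_continuous (V:=R_CompleteNormedModule)).
  intros z _. apply (continuity_pt_filterlim u z), Hc.
Qed.

Lemma isd_lin (f : R -> R) df a x : is_derive f x df -> is_derive (fun z => f z + a * z) x (df + a).
Proof.
  intros H. apply (is_derive_plus f (fun z => a * z) x df a H).
  assert (is_derive (fun z : R => a * z) x (a * 1)). { auto_derive; auto. }
  rewrite Rmult_1_r in H0. exact H0.
Qed.
Lemma isd_quad (f : R -> R) df a x : is_derive f x df -> is_derive (fun z => f z + a * z ^ 2) x (df + 2 * a * x).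
Proof.
  intros H. apply (is_derive_plus f (fun z => a * z ^ 2) x df (2 * a * x) H).
  assert (is_derive (fun z : R => a * z ^ 2) x (2 * a * x)). { auto_derive. auto. simpl. ring. }
  exact H0.
Qed.

Lemma core (u : R -> R) s r L d c :
  0 < s -> 0 < r -> 0 < L -> 0 < d < 1 -> d < L -> 0 < c ->
  (forall x, continuity_pt u x) -> u r = 0 -> u 0 = s -> Derive u 0 = 0 ->
  (forall x, 0 <= x < r -> 0 < u x /\ ex_derive u x /\ ex_derive (Derive u) x) ->
  (forall x, 0 < x < r -> Derive u x < 0) ->
  (forall x, 0 <= x < r -> d * s <= u x -> Rabs (Derive (Derive u) x + L / s) <= d / s) ->
  (forall x, 0 <= x < r -> u x <= d * s -> c <= Rabs (Derive u x)) ->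
  exists p, 0 < p /\ p * s < r /\
    (L - d) * p^2 <= 2 * (1 - d) <= (L + d) * p^2 /\
    r <= p * s + d * s / c /\
    p - (L + d) * p^3 / 6 <= RInt u 0 r / s^2 <= p - (L - d) * p^3 / 6 + d^2 / c /\
    forall x, 0 <= x <= p * s ->
      s - (L + d) * x^2 / (2*s) <= u x <= s - (L - d) * x^2 / (2*s) /\
      - ((L + d) * x / s) <= Derive u x <= - ((L - d) * x / s) /\
      Rabs (Derive (Derive u) x + L / s) <= d / s.
Proof.
  intros Hs Hr HL Hd HdL Hc Hcu Hur Hu0 Hd0 Hder Hneg H5 H6.
  destruct (IVT_gen u 0 r (d * s)) as [x1 [Hx1 Hux1]].
  { intros x; apply Hcu. }
  { rewrite Hu0, Hur. rewrite Rmin_right by lra. rewrite Rmax_left by lra. nra. }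
  rewrite Rmin_left, Rmax_right in Hx1 by lra.
  assert (Hx1a : 0 < x1).
  { destruct (Req_dec x1 0) as [->|]; [|lra]. rewrite Hu0 in Hux1. nra. }
  assert (Hx1b : x1 < r).
  { destruct (Req_dec x1 r) as [->|]; [|lra]. rewrite Hur in Hux1. nra. }
  assert (Hdle : forall x, 0 <= x < r -> Derive u x <= 0).
  { intros x Hx. destruct (Req_dec x 0) as [->|]; [lra|]. left; apply Hneg; lra. }
  assert (Hph1 : forall x, 0 <= x <= x1 -> d * s <= u x).
  { intros x Hx. assert (u x1 - u x <= 0 * (x1 - x)).
    { apply mvt_le; [lra| intros z Hz; apply Hder; lra | intros z Hz; apply Hdle; lra]. }
    lra. }
  assert (Hph2 : forall x, x1 <= x <= r -> u x <= d * s).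
  { intros x Hx. destruct (Req_dec x r) as [->|Hne]; [rewrite Hur; nra|].
    assert (u x - u x1 <= 0 * (x - x1)).
    { apply mvt_le; [lra| intros z Hz; apply Hder; lra | intros z Hz; apply Hdle; lra]. }
    lra. }
  assert (HD2 : forall x, 0 <= x <= x1 -> is_derive (Derive u) x (Derive (Derive u) x)).
  { intros x Hx. apply Derive_correct. apply Hder; lra. }
  assert (HD1 : forall x, 0 <= x <= x1 -> is_derive u x (Derive u x)).
  { intros x Hx. apply Derive_correct. apply Hder; lra. }
  assert (H5' : forall x, 0 <= x <= x1 ->
     - (L + d) / s <= Derive (Derive u) x <= - (L - d) / s).
  { intros x Hx. pose proof (H5 x ltac:(lra) (Hph1 x Hx)) as H.
    apply Rabs_le_between in H. unfold Rdiv in *. split; nra. }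
  assert (Hu'up : forall x, 0 <= x <= x1 -> Derive u x <= - ((L - d) * x / s)).
  { intros x Hx.
    pose proof (mvt_le' (fun z => Derive u z + (L - d) / s * z)
      (fun z => Derive (Derive u) z + (L - d) / s) 0 x 0 ltac:(lra)) as H.
    simpl in H. rewrite Hd0 in H.
    assert (Derive u x + (L - d) / s * x - (0 + (L - d) / s * 0) <= 0 * (x - 0)).
    { apply H.
      - intros z Hz. apply isd_lin. apply HD2; lra.
      - intros z Hz. pose proof (H5' z ltac:(lra)). unfold Rdiv in *. lra. }
    unfold Rdiv in *. lra. }
  assert (Hu'lo : forall x, 0 <= x <= x1 -> - ((L + d) * x / s) <= Derive u x).
  { intros x Hx.
    pose proof (mvt_ge' (fun z => Derive u z + (L + d) / s * z)
      (fun z => Derive (Derive u) z + (L + d) / s) 0 x 0 ltac:(lra)) as H.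
    simpl in H. rewrite Hd0 in H.
    assert (0 * (x - 0) <= Derive u x + (L + d) / s * x - (0 + (L + d) / s * 0)).
    { apply H.
      - intros z Hz. apply isd_lin. apply HD2; lra.
      - intros z Hz. pose proof (H5' z ltac:(lra)). unfold Rdiv in *. lra. }
    unfold Rdiv in *. lra. }
  assert (Huup : forall x, 0 <= x <= x1 -> u x <= s - (L - d) * x^2 / (2*s)).
  { intros x Hx.
    assert (H : u x + (L - d) / (2 * s) * x ^ 2 - (u 0 + (L - d) / (2 * s) * 0 ^ 2) <= 0 * (x - 0)).
    { apply (mvt_le' (fun z => u z + (L - d) / (2 * s) * z ^ 2)
        (fun z => Derive u z + (L - d) / s * z)); [lra| |].
      - intros z Hz. replace (Derive u z + (L - d) / s * z) with (Derive u z + 2 * ((L - d) / (2 * s)) * z) by (field; lra).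
        apply isd_quad. apply HD1; lra.
      - intros z Hz. pose proof (Hu'up z ltac:(lra)). unfold Rdiv in *. lra. }
    rewrite Hu0 in H. unfold Rdiv in *.
    replace ((L - d) * x ^ 2 * / (2 * s)) with ((L - d) * / (2 * s) * x ^ 2) by ring. lra. }
  assert (Hulo : forall x, 0 <= x <= x1 -> s - (L + d) * x^2 / (2*s) <= u x).
  { intros x Hx.
    assert (H : 0 * (x - 0) <= u x + (L + d) / (2 * s) * x ^ 2 - (u 0 + (L + d) / (2 * s) * 0 ^ 2)).
    { apply (mvt_ge' (fun z => u z + (L + d) / (2 * s) * z ^ 2)
        (fun z => Derive u z + (L + d) / s * z)); [lra| |].
      - intros z Hz. replace (Derive u z + (L + d) / s * z) with (Derive u z + 2 * ((L + d) / (2 * s)) * z) by (field; lra).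
        apply isd_quad. apply HD1; lra.
      - intros z Hz. pose proof (Hu'lo z ltac:(lra)). unfold Rdiv in *. lra. }
    rewrite Hu0 in H. unfold Rdiv in *.
    replace ((L + d) * x ^ 2 * / (2 * s)) with ((L + d) * / (2 * s) * x ^ 2) by ring. lra. }
  set (p := x1 / s).
  assert (Hx1p : x1 = p * s) by (unfold p; field; lra).
  assert (Hp : 0 < p) by (unfold p; apply Rdiv_lt_0_compat; lra).
  exists p. split; [auto|]. split; [lra|].
  split.
  { pose proof (Huup x1 ltac:(lra)) as A1. pose proof (Hulo x1 ltac:(lra)) as A2.
    rewrite Hux1, Hx1p in A1, A2.
    replace (s - (L - d) * (p * s) ^ 2 / (2 * s)) with (s * (1 - (L - d) * p ^ 2 / 2)) in A1 by (field; lra).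
    replace (s - (L + d) * (p * s) ^ 2 / (2 * s)) with (s * (1 - (L + d) * p ^ 2 / 2)) in A2 by (field; lra).
    split; nra. }
  assert (Hex : forall a b, ex_RInt u a b) by (intros; apply ex_RInt_cont; auto).
  assert (Hch : RInt u 0 r = RInt u 0 x1 + RInt u x1 r).
  { symmetry. apply (RInt_Chasles u 0 x1 r); auto. }
  assert (Hexq : forall k a b, ex_RInt (fun x => s - k * x ^ 2) a b).
  { intros k a b. apply ex_RInt_cont. intros x. apply cpt_of_ex_derive. auto_derive. auto. }
  assert (I1 : RInt u 0 x1 <= s * x1 - (L - d) / (2 * s) * x1 ^ 3 / 3).
  { rewrite <- RInt_quad. apply RInt_le; auto; [lra|].
    intros x Hx. pose proof (Huup x ltac:(lra)). unfold Rdiv in *.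
    replace ((L - d) * / (2 * s) * x ^ 2) with ((L - d) * x ^ 2 * / (2 * s)) by ring. lra. }
  assert (I2 : s * x1 - (L + d) / (2 * s) * x1 ^ 3 / 3 <= RInt u 0 x1).
  { rewrite <- RInt_quad. apply RInt_le; auto; [lra|].
    intros x Hx. pose proof (Hulo x ltac:(lra)). unfold Rdiv in *.
    replace ((L + d) * / (2 * s) * x ^ 2) with ((L + d) * x ^ 2 * / (2 * s)) by ring. lra. }
  assert (I3 : 0 <= RInt u x1 r).
  { apply RInt_ge_0; auto; [lra|]. intros x Hx. left. apply Hder. lra. }
  assert (I4 : RInt u x1 r <= (r - x1) * (d * s)).
  { assert (RInt u x1 r <= RInt (fun _ => d * s) x1 r).
    { apply RInt_le; auto; [lra| apply ex_RInt_const|]. intros x Hx. apply Hph2; lra. }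
    rewrite RInt_const in H. exact H. }
  assert (Hrx1 : r - x1 <= d * s / c).
  {
    destruct (Rle_or_lt r (x1 + d * s / c)) as [?|Hgt]; [lra|]. exfalso.
    set (x := x1 + d * s / c).
    assert (Hdsc : 0 < d * s / c) by (apply Rdiv_lt_0_compat; nra).
    assert (Hxr : x < r) by (unfold x; lra).
    assert (Hm' : u x - u x1 <= - c * (x - x1)).
    { apply (mvt_le u x1 x (- c) ltac:(unfold x; lra)).
      - intros z Hz. apply Hder. unfold x in *; lra.
      - intros z Hz.
        assert (Hz' : 0 <= z < r) by (unfold x in *; lra).
        pose proof (H6 z Hz' (Hph2 z ltac:(lra))) as Hcz.
        assert (Derive u z <= 0) by (apply Hdle; auto).
        rewrite Rabs_left1 in Hcz by auto. lra. }
    assert (Hx0 : 0 <= x < r) by (unfold x in *; lra).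
    pose proof (proj1 (Hder x Hx0)) as Hpos.
    unfold x in Hm', Hpos. rewrite Hux1 in Hm'.
    replace (- c * (x1 + d * s / c - x1)) with (- (d * s)) in Hm' by (field; lra).
    lra. }
  split; [rewrite Hx1p in Hrx1; lra|].
  split.
  { rewrite Hch. rewrite Hx1p in I1, I2, I4, Hrx1, I3 |- *.
    assert (Es : forall k, (s * (p * s) - k / (2 * s) * (p * s) ^ 3 / 3) / s ^ 2 = p - k * p ^ 3 / 6)
      by (intros; field; lra).
    assert (Hs2 : 0 < s ^ 2) by nra.
    assert (Hd4 : (r - p * s) * (d * s) <= (d * s / c) * (d * s)).
    { apply Rmult_le_compat_r; nra. }
    replace (d * s / c * (d * s)) with (d ^ 2 / c * s ^ 2) in Hd4 by (field; lra).
    rewrite <- (Es (L + d)), <- (Es (L - d)).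
    split.
    - apply Rmult_le_compat_r; [left; apply Rinv_0_lt_compat; auto|]. lra.
    - replace ((s * (p * s) - (L - d) / (2 * s) * (p * s) ^ 3 / 3) / s ^ 2 + d ^ 2 / c)
        with ((s * (p * s) - (L - d) / (2 * s) * (p * s) ^ 3 / 3 + d ^ 2 / c * s ^ 2) / s ^ 2)
        by (field; lra).
      apply Rmult_le_compat_r; [left; apply Rinv_0_lt_compat; auto|]. lra. }
  intros x Hx. rewrite <- Hx1p in Hx.
  split; [split; [apply Hulo| apply Huup]; lra|].
  split; [split; [apply Hu'lo| apply Hu'up]; lra|].
  apply H5; [lra| apply Hph1; lra].
Qed.

Definition CC (u : R -> R) s r L d c : Prop :=
  exists p, 0 < p /\ p * s < r /\
    (L - d) * p^2 <= 2 * (1 - d) <= (L + d) * p^2 /\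
    r <= p * s + d * s / c /\
    p - (L + d) * p^3 / 6 <= RInt u 0 r / s^2 <= p - (L - d) * p^3 / 6 + d^2 / c /\
    forall x, 0 <= x <= p * s ->
      s - (L + d) * x^2 / (2*s) <= u x <= s - (L - d) * x^2 / (2*s) /\
      - ((L + d) * x / s) <= Derive u x <= - ((L - d) * x / s) /\
      Rabs (Derive (Derive u) x + L / s) <= d / s.

Lemma apply_core (Q : R -> R) L q1 d s r (v : R -> R) :
  (forall x, 0 < x -> ex_derive Q x) -> 0 < L -> 0 < q1 -> (forall t, 0 < t -> q1 <= Q t) ->
  0 < d < 1 -> d < L -> (L + 1) * d <= q1 / 2 ->
  Rabs (Q s - L) <= d ^ 2 / 2 -> (forall t, d * s <= t -> Rabs (t * Derive Q t) <= d ^ 2 / 2) ->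
  0 < s -> is_sol_P Q s v r -> setA Q s ->
  CC v s r L d (sqrt q1).
Proof.
  intros HQd HL Hq1 Hq1b Hd HdL Hdq HQs HQ' Hs Hsol HA.
  assert (HQs0 : 0 < Q s).
  { apply Rabs_le_between in HQs. assert (d ^ 2 < L) by nra. lra. }
  destruct (sol_facts Q s v r HQd Hsol HA HQs0) as [HE [HLe Hneg]].
  pose proof (cont_of_sol _ _ _ _ Hsol) as Hcu.
  destruct Hsol as [Hr [_ [Hode [Hout [H0 Hd0]]]]].
  assert (Hc : 0 < sqrt q1) by (apply sqrt_lt_R0; auto).
  apply (core v s r L d (sqrt q1)); auto.
  - apply Hout. rewrite Rabs_pos_eq; lra.
  - intros x Hx. destruct (Hode x ltac:(lra)) as [? [? [? _]]]. auto.
  - intros x Hx Hux. destruct (Hode x ltac:(lra)) as [Hp [_ [_ Heq]]].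
    change (Derive_n v 2 x) with (Derive (Derive v) x) in Heq. unfold Rq in Heq.
    assert (Heq' : Derive (Derive v) x = Derive Q (v x) - Q s / s) by lra.
    rewrite Heq'.
    replace (Derive Q (v x) - Q s / s + L / s) with (Derive Q (v x) + (L - Q s) / s)
      by (field; lra).
    assert (Hvx : 0 < v x) by auto.
    pose proof (HQ' (v x) Hux) as Hq'. rewrite Rabs_mult, (Rabs_pos_eq (v x)) in Hq' by lra.
    assert (Hds : 0 < d * s) by nra.
    assert (A1 : Rabs (Derive Q (v x)) <= d / 2 / s).
    { assert (Rabs (Derive Q (v x)) * (d * s) <= d ^ 2 / 2).
      { apply Rle_trans with (2 := Hq'). rewrite Rmult_comm.
        apply Rmult_le_compat_r; [apply Rabs_pos| auto]. }
      apply (Rmult_le_reg_r (d * s)); auto.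
      replace (d / 2 / s * (d * s)) with (d ^ 2 / 2) by (field; lra). auto. }
    assert (A2 : Rabs ((L - Q s) / s) <= d ^ 2 / 2 / s).
    { unfold Rdiv. rewrite Rabs_mult, (Rabs_pos_eq (/ s)) by (left; apply Rinv_0_lt_compat; auto).
      apply Rmult_le_compat_r; [left; apply Rinv_0_lt_compat; auto|].
      rewrite <- Rabs_Ropp. replace (- (L - Q s)) with (Q s - L) by ring. auto. }
    eapply Rle_trans; [apply Rabs_triang|].
    apply Rle_trans with (d / 2 / s + d ^ 2 / 2 / s); [lra|].
    replace (d / 2 / s + d ^ 2 / 2 / s) with ((d / 2 + d ^ 2 / 2) * / s) by (field; lra).
    replace (d / s) with (d * / s) by (field; lra).
    apply Rmult_le_compat_r; [left; apply Rinv_0_lt_compat; auto|]. nra.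
  - intros x Hx Hux. destruct (Hode x ltac:(lra)) as [Hp _].
    pose proof (HE x ltac:(lra)) as Hen.
    assert (Hb : q1 <= Derive v x ^ 2).
    { rewrite Hen. pose proof (Hq1b (v x) Hp).
      assert (Q s / s * v x <= Q s * d).
      { unfold Rdiv. replace (Q s * / s * v x) with (Q s * (v x / s)) by (field; lra).
        apply Rmult_le_compat_l; [lra|]. apply (Rmult_le_reg_r s); auto.
        replace (v x / s * s) with (v x) by (field; lra). lra. }
      apply Rabs_le_between in HQs. assert (Q s * d <= (L + 1) * d) by nra. nra. }
    rewrite <- sqrt_Rsqr_abs. apply sqrt_le_1_alt. unfold Rsqr. simpl in Hb. lra.
Qed.

Lemma lim_inf_eps (f : R -> R) (l : R) : is_lim f p_infty l ->
  forall eps, 0 < eps -> exists T, forall t, T < t -> Rabs (f t - l) < eps.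
Proof.
  intros H eps He. apply is_lim_spec in H.
  destruct (H (mkposreal _ He)) as [T HT]. exists T. intros t Ht. apply HT. auto.
Qed.

Lemma seq_inf (u : nat -> R) : is_lim_seq u p_infty ->
  forall M, exists N, forall n, (N <= n)%nat -> M < u n.
Proof.
  intros H M. apply is_lim_seq_spec in H. destruct (H M) as [N HN]. exists N. auto.
Qed.

Lemma seq_lim_intro (u : nat -> R) (l : R) :
  (forall eps, 0 < eps -> exists N, forall n, (N <= n)%nat -> Rabs (u n - l) < eps) ->
  is_lim_seq u l.
Proof.
  intros H. apply is_lim_seq_spec. intros eps.
  destruct (H eps (cond_pos eps)) as [N HN]. exists N. auto.
Qed.

Lemma seq_lim_elim (u : nat -> R) (l : R) : is_lim_seq u l ->
  forall eps, 0 < eps -> exists N, forall n, (N <= n)%nat -> Rabs (u n - l) < eps.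
Proof.
  intros H eps He. apply is_lim_seq_spec in H. destruct (H (mkposreal _ He)) as [N HN].
  exists N. auto.
Qed.

Lemma q1_exists (Q : R -> R) A m L (u0 : nat -> R) :
  H_EL Q A m -> 0 < L -> is_lim Q p_infty L ->
  (forall k, setA Q (u0 k)) -> is_lim_seq u0 p_infty ->
  exists q1, 0 < q1 /\ forall t, 0 < t -> q1 <= Q t.
Proof.
  intros [HC1 [_ [_ [HA [Hm [Hlim _]]]]]] HL HQinf HAk Hu0.
  assert (H1 : exists d, 0 < d <= 1 /\ forall y, 0 < y < d -> A / 2 <= Q y).
  { apply filterlim_locally with (eps := mkposreal (1/2) ltac:(lra)) in Hlim.
    destruct Hlim as [d Hd]. exists (Rmin d 1). split; [split; [apply Rmin_case; [apply cond_pos|lra]|apply Rmin_r]|].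
    intros y Hy. assert (Hy1 : y < d) by (pose proof (Rmin_l d 1); lra).
    assert (Hy2 : y <= 1) by (pose proof (Rmin_r d 1); lra).
    assert (Hb : ball 0 d y).
    { change (Rabs (y - 0) < d). rewrite Rabs_pos_eq; lra. }
    specialize (Hd y Hb ltac:(lra)). change (Rabs (Q y / (A * Rpower y (1 - m)) - 1) < 1/2) in Hd.
    apply Rabs_def2 in Hd.
    assert (Hp : 1 <= Rpower y (1 - m)).
    { unfold Rpower. pose proof (exp_ineq1_le ((1 - m) * ln y)).
      assert (ln y <= 0) by (rewrite <- ln_1; apply ln_le; lra). nra. }
    assert (HAp : 0 < A * Rpower y (1 - m)) by (apply Rmult_lt_0_compat; lra).
    assert (Q y = Q y / (A * Rpower y (1 - m)) * (A * Rpower y (1 - m))) by (field; lra).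
    rewrite H. nra. }
  destruct H1 as [d [Hd Hnear]].
  destruct (lim_inf_eps Q L HQinf (L / 2) ltac:(lra)) as [T HT].
  assert (Hpos : forall t, 0 < t -> 0 < Q t).
  { intros t Ht. destruct (seq_inf u0 Hu0 (Rmax t T)) as [N HN].
    specialize (HN N (le_n N)). pose proof (Rmax_l t T). pose proof (Rmax_r t T).
    destruct (HAk N) as [Hs [_ HRlt]].
    assert (HQs : 0 < Q (u0 N)).
    { specialize (HT (u0 N) ltac:(lra)). apply Rabs_def2 in HT. lra. }
    destruct (Req_dec t (u0 N)) as [->|Hne]; auto.
    specialize (HRlt t ltac:(lra)). unfold Rq in HRlt.
    assert (0 < Q (u0 N) / u0 N) by (apply Rdiv_lt_0_compat; lra).
    assert (0 < Q t / t) by lra.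
    replace (Q t) with (Q t / t * t) by (field; lra). nra. }
  set (T' := Rmax T 1 + 1).
  assert (HT'1 : T < T') by (unfold T'; pose proof (Rmax_l T 1); lra).
  assert (HT'2 : 1 < T') by (unfold T'; pose proof (Rmax_r T 1); lra).
  destruct (continuity_ab_min Q (d/2) T') as [mx [Hmx Hmx']].
  { lra. }
  { intros c Hc. apply cpt_of_ex_derive. apply (HC1 c). lra. }
  assert (Hmq : 0 < Q mx) by (apply Hpos; lra).
  exists (Rmin (A / 2) (Rmin (Q mx) (L / 2))).
  pose proof (Rmin_l (A/2) (Rmin (Q mx) (L / 2))).
  pose proof (Rmin_r (A/2) (Rmin (Q mx) (L / 2))).
  pose proof (Rmin_l (Q mx) (L / 2)). pose proof (Rmin_r (Q mx) (L / 2)).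
  split. { apply Rmin_case; [lra|apply Rmin_case; lra]. }
  intros t Ht.
  destruct (Rlt_or_le t d). { specialize (Hnear t ltac:(lra)). lra. }
  destruct (Rle_or_lt t T'). { specialize (Hmx t ltac:(lra)). lra. }
  specialize (HT t ltac:(lra)). apply Rabs_def2 in HT. lra.
Qed.

Lemma eventually_CC (Q : R -> R) A m L q1 (u0 : nat -> R) (u : nat -> R -> R) (rb : nat -> R) d :
  H_EL Q A m -> 0 < L -> is_lim Q p_infty L -> is_lim (fun s => s * Derive Q s) p_infty 0 ->
  (forall k, setA Q (u0 k)) -> is_lim_seq u0 p_infty ->
  (forall k, is_sol_P Q (u0 k) (u k) (rb k)) ->
  0 < q1 -> (forall t, 0 < t -> q1 <= Q t) ->
  0 < d < 1 -> d < L -> (L + 1) * d <= q1 / 2 ->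
  exists K, forall k, (K <= k)%nat ->
    CC (u k) (u0 k) (rb k) L d (sqrt q1) /\
    CC (fun y => u k (- y)) (u0 k) (rb k) L d (sqrt q1).
Proof.
  intros HEL HL HQinf HQ' HA Hu0 Hu Hq1 Hq1b Hd HdL Hdq.
  assert (HQd : forall x, 0 < x -> ex_derive Q x) by (intros x Hx; apply (proj1 HEL x Hx)).
  assert (He : 0 < d ^ 2 / 2) by nra.
  destruct (lim_inf_eps Q L HQinf _ He) as [T1 HT1].
  destruct (lim_inf_eps _ 0 HQ' _ He) as [T2 HT2].
  destruct (seq_inf u0 Hu0 (Rmax T1 (T2 / d))) as [K HK].
  exists K. intros k Hk. specialize (HK k Hk).
  pose proof (Rmax_l T1 (T2 / d)). pose proof (Rmax_r T1 (T2 / d)).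
  assert (Hs : 0 < u0 k) by apply (HA k).
  assert (H1 : Rabs (Q (u0 k) - L) <= d ^ 2 / 2) by (left; apply HT1; lra).
  assert (H2 : forall t, d * u0 k <= t -> Rabs (t * Derive Q t) <= d ^ 2 / 2).
  { intros t Ht. left. replace (t * Derive Q t) with (t * Derive Q t - 0) by ring. apply HT2.
    assert (T2 < d * u0 k).
    { assert (Hq : T2 / d < u0 k) by lra. apply (Rmult_lt_compat_l d) in Hq; [|lra].
      replace (d * (T2 / d)) with T2 in Hq by (field; lra). lra. }
    lra. }
  split.
  - apply (apply_core Q L q1 d (u0 k) (rb k) (u k)); auto.
  - apply (apply_core Q L q1 d (u0 k) (rb k) (fun y => u k (- y))); auto.
    apply refl_sol; auto.
Qed.

Lemma p_close L d p : 0 < L -> 0 < d <= L / 2 -> 0 < p ->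
  (L - d) * p^2 <= 2 * (1 - d) <= (L + d) * p^2 ->
  p ^ 2 <= 4 / L /\ Rabs (p - sqrt (2 / L)) <= d * ((4 / L + 2) / (L * sqrt (2 / L))).
Proof.
  intros HL Hd Hp [H1 H2].
  set (z := sqrt (2 / L)).
  assert (Hz : 0 < z) by (apply sqrt_lt_R0; apply Rdiv_lt_0_compat; lra).
  assert (Hz2 : z ^ 2 = 2 / L) by (unfold z; simpl; rewrite Rmult_1_r; apply sqrt_sqrt; left; apply Rdiv_lt_0_compat; lra).
  assert (H0p : 0 <= p ^ 2) by nra.
  assert (Hp2 : p ^ 2 <= 4 / L).
  { apply (Rmult_le_reg_l L); auto. replace (L * (4 / L)) with 4 by (field; lra).
    assert ((L / 2) * p ^ 2 <= (L - d) * p ^ 2) by (apply Rmult_le_compat_r; lra). lra. }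
  split; auto.
  assert (Hb : Rabs (L * p ^ 2 - 2) <= d * (p ^ 2 + 2)).
  { apply Rabs_le. split; nra. }
  assert (Hb' : Rabs (L * p ^ 2 - 2) <= d * (4 / L + 2)).
  { eapply Rle_trans; [exact Hb|]. apply Rmult_le_compat_l; lra. }
  assert (Hb2 : Rabs (p ^ 2 - z ^ 2) <= d * (4 / L + 2) / L).
  { rewrite Hz2. replace (p ^ 2 - 2 / L) with ((L * p ^ 2 - 2) / L) by (field; lra).
    unfold Rdiv at 1. rewrite Rabs_mult, (Rabs_pos_eq (/ L)) by (left; apply Rinv_0_lt_compat; auto).
    unfold Rdiv. apply Rmult_le_compat_r; [left; apply Rinv_0_lt_compat; auto| auto]. }
  replace (p ^ 2 - z ^ 2) with ((p - z) * (p + z)) in Hb2 by ring.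
  rewrite Rabs_mult, (Rabs_pos_eq (p + z)) in Hb2 by lra.
  assert (Habs : Rabs (p - z) * z <= d * (4 / L + 2) / L).
  { apply Rle_trans with (2 := Hb2). apply Rmult_le_compat_l; [apply Rabs_pos|lra]. }
  apply (Rmult_le_reg_r z); auto.
  replace (d * ((4 / L + 2) / (L * z)) * z) with (d * (4 / L + 2) / L) by (field; split; lra).
  auto.
Qed.

Lemma rho_close v s r L d c : 0 < s -> 0 < L -> 0 < d <= L / 2 -> 0 < c ->
  CC v s r L d c -> Rabs (r / s - sqrt (2 / L)) <= d * (1 / c + (4 / L + 2) / (L * sqrt (2 / L))).
Proof.
  intros Hs HL Hd Hc [p [Hp [Hps [Hpp [Hr _]]]]].
  destruct (p_close L d p HL Hd Hp Hpp) as [_ Hpz].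
  assert (p < r / s) by (apply (Rmult_lt_reg_r s); auto; replace (r / s * s) with r by (field; lra); lra).
  assert (r / s <= p + d / c).
  { apply (Rmult_le_reg_r s); auto. replace (r / s * s) with r by (field; lra).
    replace ((p + d / c) * s) with (p * s + d * s / c) by (field; lra). auto. }
  assert (0 <= d / c) by (apply Rlt_le, Rdiv_lt_0_compat; lra).
  replace (r / s - sqrt (2 / L)) with ((r / s - p) + (p - sqrt (2 / L))) by ring.
  eapply Rle_trans; [apply Rabs_triang|].
  rewrite (Rabs_pos_eq (r / s - p)) by lra.
  replace (d * (1 / c + (4 / L + 2) / (L * sqrt (2 / L)))) with
    (d / c + d * ((4 / L + 2) / (L * sqrt (2 / L)))) by (field; split; [|split]; [lra| |lra];
      apply Rgt_not_eq, sqrt_lt_R0, Rdiv_lt_0_compat; lra).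
  lra.
Qed.

Lemma M_close v s r L d c : 0 < s -> 0 < L -> 0 < d <= L / 2 -> d < 1 -> 0 < c ->
  CC v s r L d c ->
  Rabs (RInt v 0 r / s ^ 2 - 2 * sqrt (2 / L) / 3) <=
    d * (((4 / L + 1) ^ 3 / 6 + 1 / c) +
         (4 / L + 2) / (L * sqrt (2 / L)) * (1 + L * (4 / L + 1) ^ 2 / 2)).
Proof.
  intros Hs HL Hd Hd1 Hc [p [Hp [Hps [Hpp [Hr [HM _]]]]]].
  destruct (p_close L d p HL Hd Hp Hpp) as [Hp2 Hpz].
  set (z := sqrt (2 / L)) in *.
  set (K0 := (4 / L + 2) / (L * z)) in *.
  set (P := 4 / L + 1).
  set (M := RInt v 0 r / s ^ 2) in *.
  assert (Hz : 0 < z) by (apply sqrt_lt_R0; apply Rdiv_lt_0_compat; lra).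
  assert (Hz2 : z ^ 2 = 2 / L) by (unfold z; simpl; rewrite Rmult_1_r; apply sqrt_sqrt; left; apply Rdiv_lt_0_compat; lra).
  assert (H4L : 0 < 4 / L) by (apply Rdiv_lt_0_compat; lra).
  assert (HpP : p <= P) by (unfold P; nra).
  assert (HzP : z <= P).
  { unfold P. assert (2 / L <= 4 / L) by (unfold Rdiv; apply Rmult_le_compat_r; [left; apply Rinv_0_lt_compat|]; lra). nra. }
  assert (A1 : Rabs (M - (p - L * p ^ 3 / 6)) <= d * (P ^ 3 / 6 + 1 / c)).
  { assert (Hp3 : p ^ 3 <= P ^ 3) by (apply pow_incr; lra).
    assert (0 <= p ^ 3) by (apply pow_le; lra).
    assert (Hdc : d ^ 2 / c <= d * (1 / c)).
    { unfold Rdiv. rewrite Rmult_1_l. replace (d ^ 2 * / c) with (d * (d * / c)) by ring.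
      apply Rmult_le_compat_l; [lra|]. assert (0 < / c) by (apply Rinv_0_lt_compat; lra). nra. }
    apply Rabs_le. destruct HM as [HM1 HM2]. split.
    - assert (d * p ^ 3 <= d * P ^ 3) by (apply Rmult_le_compat_l; lra).
      assert (0 <= d * (1 / c)) by (apply Rmult_le_pos; [lra| left; apply Rdiv_lt_0_compat; lra]).
      lra.
    - assert (d * p ^ 3 <= d * P ^ 3) by (apply Rmult_le_compat_l; lra). lra. }
  assert (A2 : Rabs ((p - L * p ^ 3 / 6) - 2 * z / 3) <= d * K0 * (1 + L * P ^ 2 / 2)).
  { replace (2 * z / 3) with (z - L * z ^ 3 / 6).
    2:{ replace (z ^ 3) with (z * z ^ 2) by ring. rewrite Hz2. field. lra. }
    replace (p - L * p ^ 3 / 6 - (z - L * z ^ 3 / 6)) with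
      ((p - z) * (1 - L * (p ^ 2 + p * z + z ^ 2) / 6)) by field.
    rewrite Rabs_mult. apply Rmult_le_compat; try apply Rabs_pos; auto.
    assert (p ^ 2 + p * z + z ^ 2 <= 3 * P ^ 2) by nra.
    assert (0 <= p ^ 2 + p * z + z ^ 2) by nra.
    apply Rabs_le. split; nra. }
  replace (M - 2 * z / 3) with ((M - (p - L * p ^ 3 / 6)) + ((p - L * p ^ 3 / 6) - 2 * z / 3)) by ring.
  eapply Rle_trans; [apply Rabs_triang|].
  replace (d * ((P ^ 3 / 6 + 1 / c) + K0 * (1 + L * P ^ 2 / 2))) with
    (d * (P ^ 3 / 6 + 1 / c) + d * K0 * (1 + L * P ^ 2 / 2)) by ring.
  lra.
Qed.

Lemma div_le_s a b s : 0 < s -> a <= b -> a / s <= b / s.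
Proof. intros Hs H. unfold Rdiv. apply Rmult_le_compat_r; auto. left; apply Rinv_0_lt_compat; auto. Qed.

Lemma norm_bounds w s r L d c Y : 0 < s -> 0 < r -> 0 < c -> 0 < d ->
  CC w s r L d c -> 0 <= Y -> r * Y + d * s / c <= r ->
  (1 - (L + d) * (r / s) ^ 2 * Y ^ 2 / 2 <= w (r * Y) / s <= 1 - (L - d) * (r / s) ^ 2 * Y ^ 2 / 2) /\
  (- ((L + d) * (r / s) ^ 2 * Y) <= r / s * Derive w (r * Y) <= - ((L - d) * (r / s) ^ 2 * Y)) /\
  (- ((L + d) * (r / s) ^ 2) <= r ^ 2 * Derive (Derive w) (r * Y) / s <= - ((L - d) * (r / s) ^ 2)).
Proof.
  intros Hs Hr Hc Hd [p [Hp [Hps [_ [Hrp [_ Hpt]]]]]] HY HrY.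
  assert (Hx : 0 <= r * Y <= p * s) by (split; [nra| lra]).
  destruct (Hpt (r * Y) Hx) as [[A1 A2] [[B1 B2] C]].
  set (rho := r / s).
  assert (Hr' : r = rho * s) by (unfold rho; field; lra).
  assert (Hrho : 0 < rho) by (unfold rho; apply Rdiv_lt_0_compat; auto).
  rewrite Hr' in A1, A2, B1, B2, C |- *.
  split; [|split].
  - apply div_le_s with (s := s) in A1; auto. apply div_le_s with (s := s) in A2; auto.
    replace ((s - (L + d) * (rho * s * Y) ^ 2 / (2 * s)) / s) with (1 - (L + d) * rho ^ 2 * Y ^ 2 / 2) in A1 by (field; lra).
    replace ((s - (L - d) * (rho * s * Y) ^ 2 / (2 * s)) / s) with (1 - (L - d) * rho ^ 2 * Y ^ 2 / 2) in A2 by (field; lra).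
    split; lra.
  - apply (Rmult_le_compat_l rho) in B1; [|lra]. apply (Rmult_le_compat_l rho) in B2; [|lra].
    replace (rho * - ((L + d) * (rho * s * Y) / s)) with (- ((L + d) * rho ^ 2 * Y)) in B1 by (field; lra).
    replace (rho * - ((L - d) * (rho * s * Y) / s)) with (- ((L - d) * rho ^ 2 * Y)) in B2 by (field; lra).
    split; lra.
  - apply Rabs_le_between in C. destruct C as [C1 C2].
    assert (Hk : 0 <= rho ^ 2 * s) by (apply Rmult_le_pos; nra).
    apply (Rmult_le_compat_l (rho ^ 2 * s)) in C1; auto. apply (Rmult_le_compat_l (rho ^ 2 * s)) in C2; auto.
    replace ((rho * s) ^ 2 * Derive (Derive w) (rho * s * Y) / s) with
      (rho ^ 2 * s * (Derive (Derive w) (rho * s * Y) + L / s) - L * rho ^ 2) by (field; lra).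
    replace (rho ^ 2 * s * - (d / s)) with (- (d * rho ^ 2)) in C1 by (field; lra).
    replace (rho ^ 2 * s * (d / s)) with (d * rho ^ 2) in C2 by (field; lra).
    split; nra.
Qed.

Lemma DN_scaled (u : R -> R) r s y j : 0 < r -> -1 < y < 1 ->
  (forall x, -r < x < r -> ex_derive u x /\ ex_derive (Derive u) x) -> (j <= 2)%nat ->
  Derive_n (fun z => u (r * z) / s) j y = r ^ j * Derive_n u j (r * y) / s.
Proof.
  intros Hr Hy Hd Hj.
  assert (Hloc : locally (r * y) (fun x => forall k, (k <= j)%nat -> ex_derive_n u k x)).
  { apply filter_imp with (2 := loc_int (-r) r (r * y) ltac:(split; nra)).
    intros x Hx k Hk. destruct (Hd x Hx) as [H1 H2].
    destruct k as [|[|[|k]]]; simpl; auto; lia. }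
  unfold Rdiv.
  rewrite (Derive_n_scal_r (fun z => u (r * z)) j (/ s) y).
  rewrite (Derive_n_comp_scal u r j y Hloc). reflexivity.
Qed.

Lemma DN_target j y : (j <= 2)%nat ->
  Derive_n (fun z => 1 - z ^ 2) j y =
  match j with O => 1 - y ^ 2 | S O => - (2 * y) | _ => -2 end.
Proof.
  intros Hj.
  assert (D1 : forall t, Derive (fun z => 1 - z ^ 2) t = - (2 * t)).
  { intros t. apply is_derive_unique. auto_derive; auto. simpl. ring. }
  destruct j as [|[|[|j]]]; [reflexivity| | |lia].
  - simpl. apply D1.
  - change (Derive (Derive (fun z => 1 - z ^ 2)) y = -2).
    rewrite (Derive_ext _ (fun t => - (2 * t)) y D1).
    apply is_derive_unique. auto_derive; auto. ring.
Qed.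

Lemma C2_one (u : R -> R) s r L d c y j :
  0 < s -> 0 < r -> 0 < c -> 0 < d -> 0 < L ->
  (forall x, -r < x < r -> ex_derive u x /\ ex_derive (Derive u) x) ->
  CC u s r L d c -> CC (fun z => u (- z)) s r L d c ->
  -1 < y < 1 -> r * Rabs y + d * s / c <= r -> (j <= 2)%nat ->
  Rabs (Derive_n (fun z => u (r * z) / s) j y - Derive_n (fun z => 1 - z ^ 2) j y)
    <= d * (r / s) ^ 2 + Rabs (L * (r / s) ^ 2 - 2).
Proof.
  intros Hs Hr Hc Hd HL Hder HC1 HC2 Hy Hry Hj.
  rewrite (DN_scaled u r s y j Hr Hy Hder Hj), (DN_target j y Hj).
  set (rho := r / s) in *.
  set (e := L * rho ^ 2 - 2).
  assert (He : - Rabs e <= e <= Rabs e).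
  { pose proof (Rle_abs e). pose proof (Rle_abs (- e)). rewrite Rabs_Ropp in *. lra. }
  assert (Hrho : 0 < rho) by (unfold rho; apply Rdiv_lt_0_compat; auto).
  assert (Hk : forall Z, 0 <= Z <= 1 -> Z * e <= Rabs e /\ - Rabs e <= Z * e).
  { intros Z HZ. destruct (Rle_or_lt 0 e); split; nra. }
  assert (Hdr : 0 <= d * rho ^ 2) by (apply Rmult_le_pos; nra).
  assert (Hr2 : r ^ 2 / s = rho ^ 2 * s) by (unfold rho; field; lra).
  destruct (Rle_or_lt 0 y) as [Hy0|Hy0].
  - rewrite Rabs_pos_eq in Hry by auto.
    destruct (norm_bounds u s r L d c y Hs Hr Hc Hd HC1 Hy0 Hry) as [N0 [N1 N2]].
    fold rho in N0, N1, N2.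
    destruct (Hk (y ^ 2) ltac:(split; nra)) as [K1 K2].
    destruct (Hk y ltac:(lra)) as [K3 K4].
    assert (0 <= d * rho ^ 2 * (1 - y ^ 2)) by (apply Rmult_le_pos; nra).
    assert (0 <= d * rho ^ 2 * (1 - y)) by (apply Rmult_le_pos; nra).
    assert (0 <= d * rho ^ 2 * y ^ 2) by (apply Rmult_le_pos; nra).
    assert (0 <= d * rho ^ 2 * y) by (apply Rmult_le_pos; nra).
    unfold e in *.
    destruct j as [|[|[|j]]]; [| | |lia]; apply Rabs_le.
    + change (Derive_n u 0 (r * y)) with (u (r * y)). rewrite pow_O, Rmult_1_l. split; nra.
    + change (Derive_n u 1 (r * y)) with (Derive u (r * y)).
      replace (r ^ 1 * Derive u (r * y) / s) with (rho * Derive u (r * y)) by (unfold rho; field; lra).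
      split; nra.
    + change (Derive_n u 2 (r * y)) with (Derive (Derive u) (r * y)).
      split; nra.
  - rewrite Rabs_left in Hry by auto.
    destruct (norm_bounds (fun z => u (- z)) s r L d c (- y) Hs Hr Hc Hd HC2 ltac:(lra) Hry) as [N0 [N1 N2]].
    fold rho in N0, N1, N2.
    destruct (refl_derivs u r (r * - y) Hder ltac:(split; nra)) as [_ [_ [E1 E2]]].
    rewrite E1 in N1. rewrite E2 in N2.
    replace (- (r * - y)) with (r * y) in N0, N1, N2 by ring.
    destruct (Hk ((- y) ^ 2) ltac:(split; nra)) as [K1 K2].
    destruct (Hk (- y) ltac:(lra)) as [K3 K4].
    assert (0 <= d * rho ^ 2 * (1 - (- y) ^ 2)) by (apply Rmult_le_pos; nra).
    assert (0 <= d * rho ^ 2 * (1 - (- y))) by (apply Rmult_le_pos; nra).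
    assert (0 <= d * rho ^ 2 * (- y) ^ 2) by (apply Rmult_le_pos; nra).
    assert (0 <= d * rho ^ 2 * (- y)) by (apply Rmult_le_pos; nra).
    unfold e in *.
    destruct j as [|[|[|j]]]; [| | |lia]; apply Rabs_le.
    + change (Derive_n u 0 (r * y)) with (u (r * y)). rewrite pow_O, Rmult_1_l. split; nra.
    + change (Derive_n u 1 (r * y)) with (Derive u (r * y)).
      replace (r ^ 1 * Derive u (r * y) / s) with (rho * Derive u (r * y)) by (unfold rho; field; lra).
      split; nra.
    + change (Derive_n u 2 (r * y)) with (Derive (Derive u) (r * y)).
      split; nra.
Qed.

Theorem mainTheorem12
  (Q : R -> R) (A m S : R)
  (HEL : H_EL Q A m) (HR : H_R Q) (Hestar : estar_infinite Q)
  (HS : 0 < - S)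
  (HQinf : is_lim Q p_infty (- S))
  (HQ'inf : is_lim (fun s => s * Derive Q s) p_infty 0)
  (u0 : nat -> R) (HA : forall k, setA Q (u0 k))
  (Hu0 : is_lim_seq u0 p_infty)
  (u : nat -> R -> R) (rb : nat -> R)
  (Hu : forall k, is_sol_P Q (u0 k) (u k) (rb k)) :
  is_lim_seq (fun k => mass (u k) (rb k)) p_infty /\
  is_lim_seq (fun k => u0 k ^ 4 / (9 * Rabs S / 32 * mass (u k) (rb k) ^ 2)) 1 /\
  is_lim_seq (fun k => rb k ^ 4 / (9 / (8 * Rabs S) * mass (u k) (rb k) ^ 2)) 1 /\
  (forall a, 0 <= a < 1 -> forall j : nat, (j <= 2)%nat ->
     forall eps, 0 < eps -> exists K : nat, forall k, (K <= k)%nat ->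
       forall y, Rabs y <= a ->
         Rabs (Derive_n (fun z => u k (rb k * z) / u0 k) j y
               - Derive_n (fun z => 1 - z ^ 2) j y) < eps).
Proof.
  set (L := - S) in *.
  assert (HL : 0 < L) by exact HS.
  assert (HSL : Rabs S = L) by (unfold L in *; rewrite Rabs_left; lra).
  rewrite HSL.
  destruct (q1_exists Q A m L u0 HEL HL HQinf HA Hu0) as [q1 [Hq1 Hq1b]].
  set (c := sqrt q1).
  assert (Hc : 0 < c) by (apply sqrt_lt_R0; auto).
  set (z := sqrt (2 / L)).
  assert (Hz : 0 < z) by (apply sqrt_lt_R0; apply Rdiv_lt_0_compat; lra).
  assert (Hz2 : z ^ 2 = 2 / L) by (unfold z; simpl; rewrite Rmult_1_r; apply sqrt_sqrt; left; apply Rdiv_lt_0_compat; lra).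
  set (d0 := Rmin (1 / 2) (Rmin (L / 2) (q1 / (2 * (L + 1))))).
  assert (Hd0a : d0 <= 1 / 2) by apply Rmin_l.
  assert (Hd0b : d0 <= L / 2) by (pose proof (Rmin_r (1/2) (Rmin (L / 2) (q1 / (2 * (L + 1))))); pose proof (Rmin_l (L / 2) (q1 / (2 * (L + 1)))); unfold d0; lra).
  assert (Hd0c : d0 <= q1 / (2 * (L + 1))) by (pose proof (Rmin_r (1/2) (Rmin (L / 2) (q1 / (2 * (L + 1))))); pose proof (Rmin_r (L / 2) (q1 / (2 * (L + 1)))); unfold d0; lra).
  assert (Hd0p : 0 < d0).
  { unfold d0. apply Rmin_case; [lra|]. apply Rmin_case; [lra|]. apply Rdiv_lt_0_compat; lra. }
  assert (Hev : forall d, 0 < d <= d0 -> exists K, forall k, (K <= k)%nat ->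
      CC (u k) (u0 k) (rb k) L d c /\ CC (fun y => u k (- y)) (u0 k) (rb k) L d c).
  { intros d Hd. apply (eventually_CC Q A m L q1 u0 u rb d); auto; try lra.
    assert (d * (2 * (L + 1)) <= q1).
    { apply (Rmult_le_compat_r (2 * (L + 1))) in Hd0c; [|lra].
      replace (q1 / (2 * (L + 1)) * (2 * (L + 1))) with q1 in Hd0c by (field; lra). nra. }
    lra. }
  assert (Hs : forall k, 0 < u0 k) by (intros k; apply (HA k)).
  assert (Hr : forall k, 0 < rb k) by (intros k; apply (Hu k)).
  set (K1 := 1 / c + (4 / L + 2) / (L * z)).
  assert (HK1 : 0 < K1).
  { unfold K1. assert (0 < 1 / c) by (apply Rdiv_lt_0_compat; lra).
    assert (0 < (4 / L + 2) / (L * z)).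
    { apply Rdiv_lt_0_compat; [|nra]. assert (0 < 4 / L) by (apply Rdiv_lt_0_compat; lra). lra. }
    lra. }
  assert (Hrho : is_lim_seq (fun k => rb k / u0 k) z).
  { apply seq_lim_intro. intros eps Heps.
    set (d := Rmin d0 (eps / (2 * K1))).
    assert (Hd1 : d <= d0) by apply Rmin_l.
    assert (Hd2 : d <= eps / (2 * K1)) by apply Rmin_r.
    assert (Hd : 0 < d) by (unfold d; apply Rmin_case; [lra| apply Rdiv_lt_0_compat; lra]).
    destruct (Hev d ltac:(lra)) as [K HK]. exists K. intros k Hk.
    destruct (HK k Hk) as [HC _].
    pose proof (rho_close (u k) (u0 k) (rb k) L d c (Hs k) HL ltac:(lra) Hc HC) as H.
    fold z in H. fold K1 in H.
    assert (d * K1 <= eps / 2).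
    { apply (Rmult_le_compat_r K1) in Hd2; [|lra].
      replace (eps / (2 * K1) * K1) with (eps / 2) in Hd2 by (field; lra). lra. }
    lra. }
  set (K2 := ((4 / L + 1) ^ 3 / 6 + 1 / c) + (4 / L + 2) / (L * z) * (1 + L * (4 / L + 1) ^ 2 / 2)).
  assert (HK2 : 0 < K2).
  { unfold K2. assert (0 < 4 / L) by (apply Rdiv_lt_0_compat; lra).
    assert (0 < 1 / c) by (apply Rdiv_lt_0_compat; lra).
    assert (0 < (4 / L + 1) ^ 3) by (apply pow_lt; lra).
    assert (0 < (4 / L + 2) / (L * z)) by (apply Rdiv_lt_0_compat; nra).
    assert (0 < 1 + L * (4 / L + 1) ^ 2 / 2) by (assert (0 < (4 / L + 1) ^ 2) by (apply pow_lt; lra); nra).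
    nra. }
  assert (HM : is_lim_seq (fun k => RInt (u k) 0 (rb k) / u0 k ^ 2) (2 * z / 3)).
  { apply seq_lim_intro. intros eps Heps.
    set (d := Rmin d0 (eps / (2 * K2))).
    assert (Hd1 : d <= d0) by apply Rmin_l.
    assert (Hd2 : d <= eps / (2 * K2)) by apply Rmin_r.
    assert (Hd : 0 < d) by (unfold d; apply Rmin_case; [lra| apply Rdiv_lt_0_compat; lra]).
    destruct (Hev d ltac:(lra)) as [K HK]. exists K. intros k Hk.
    destruct (HK k Hk) as [HC _].
    pose proof (M_close (u k) (u0 k) (rb k) L d c (Hs k) HL ltac:(lra) ltac:(lra) Hc HC) as H.
    fold z in H. fold K2 in H.
    assert (d * K2 <= eps / 2).
    { apply (Rmult_le_compat_r K2) in Hd2; [|lra].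
      replace (eps / (2 * K2) * K2) with (eps / 2) in Hd2 by (field; lra). lra. }
    lra. }
  assert (HMpos : eventually (fun k => z / 3 < RInt (u k) 0 (rb k) / u0 k ^ 2)).
  { destruct (seq_lim_elim _ _ HM (z / 3) ltac:(lra)) as [N HN]. exists N. intros k Hk.
    specialize (HN k Hk). apply Rabs_def2 in HN. lra. }
  split; [|split; [|split]].
  -
    apply is_lim_seq_ext with (fun k => (u0 k * u0 k) * (2 * (RInt (u k) 0 (rb k) / u0 k ^ 2))).
    { intros k. unfold mass. pose proof (Hs k). field. lra. }
    apply is_lim_seq_mult with p_infty (Finite (2 * (2 * z / 3))).
    + apply is_lim_seq_mult with p_infty p_infty; auto. apply is_Rbar_mult_p_infty_pos. simpl. auto.
    + apply is_lim_seq_scal_l with (lu := Finite (2 * z / 3)). auto.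
    + apply is_Rbar_mult_p_infty_pos. simpl. lra.
  - apply is_lim_seq_ext_loc with (fun k => / (9 * L / 8 * (RInt (u k) 0 (rb k) / u0 k ^ 2) ^ 2)).
    { destruct HMpos as [N HN]. exists N. intros k Hk. specialize (HN k Hk).
      pose proof (Hs k).
      assert (HR0 : 0 < RInt (u k) 0 (rb k)).
      { assert (0 < RInt (u k) 0 (rb k) / u0 k ^ 2) by lra.
        assert (0 < u0 k ^ 2) by (apply pow_lt; lra).
        replace (RInt (u k) 0 (rb k)) with (RInt (u k) 0 (rb k) / u0 k ^ 2 * u0 k ^ 2) by (field; lra).
        nra. }
      unfold mass. field. repeat split; lra. }
    replace 1 with ((fun x => / (9 * L / 8 * x ^ 2)) (2 * z / 3)).
    2:{ cbv beta. replace ((2 * z / 3) ^ 2) with (4 / 9 * z ^ 2) by (field). rewrite Hz2. field. lra. }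
    apply (is_lim_seq_continuous (fun x => / (9 * L / 8 * x ^ 2)) (fun k => RInt (u k) 0 (rb k) / u0 k ^ 2) (2 * z / 3)); auto.
    apply cpt_of_ex_derive. auto_derive. apply Rgt_not_eq. assert (0 < (2 * z / 3) ^ 2) by (apply pow_lt; lra).
    assert (0 < 9 / (2 * L)) by (apply Rdiv_lt_0_compat; lra). nra.
  - apply is_lim_seq_ext_loc with
      (fun k => (rb k / u0 k) ^ 4 * / (9 / (2 * L) * (RInt (u k) 0 (rb k) / u0 k ^ 2) ^ 2)).
    { destruct HMpos as [N HN]. exists N. intros k Hk. specialize (HN k Hk).
      pose proof (Hs k).
      assert (HR0 : 0 < RInt (u k) 0 (rb k)).
      { assert (0 < RInt (u k) 0 (rb k) / u0 k ^ 2) by lra.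
        assert (0 < u0 k ^ 2) by (apply pow_lt; lra).
        replace (RInt (u k) 0 (rb k)) with (RInt (u k) 0 (rb k) / u0 k ^ 2 * u0 k ^ 2) by (field; lra).
        nra. }
      unfold mass. field. repeat split; lra. }
    assert (Heq1 : z ^ 4 * (fun x => / (9 / (2 * L) * x ^ 2)) (2 * z / 3) = 1).
    { cbv beta. replace ((2 * z / 3) ^ 2) with (4 / 9 * z ^ 2) by (field).
      replace (z ^ 4) with (z ^ 2 * z ^ 2) by ring. rewrite Hz2. field. lra. }
    rewrite <- Heq1.
    apply is_lim_seq_mult'.
    + apply (is_lim_seq_continuous (fun x => x ^ 4) (fun k => rb k / u0 k) z); auto.
      apply cpt_of_ex_derive. auto_derive. auto.
    + apply (is_lim_seq_continuous (fun x => / (9 / (2 * L) * x ^ 2)) (fun k => RInt (u k) 0 (rb k) / u0 k ^ 2) (2 * z / 3)); auto.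
      apply cpt_of_ex_derive. auto_derive. apply Rgt_not_eq. assert (0 < (2 * z / 3) ^ 2) by (apply pow_lt; lra).
      assert (0 < 9 / (2 * L)) by (apply Rdiv_lt_0_compat; lra). nra.
  - intros a Ha j Hj eps Heps.
    set (B := (z + 1) ^ 2).
    assert (HB : 0 < B) by (apply pow_lt; lra).
    set (d := Rmin d0 (Rmin (eps / (2 * B)) (c * z * (1 - a) / 4))).
    assert (Hd1 : d <= d0) by apply Rmin_l.
    assert (Hd2 : d <= eps / (2 * B)) by (pose proof (Rmin_r d0 (Rmin (eps / (2 * B)) (c * z * (1 - a) / 4))); pose proof (Rmin_l (eps / (2 * B)) (c * z * (1 - a) / 4)); unfold d; lra).
    assert (Hd3 : d <= c * z * (1 - a) / 4) by (pose proof (Rmin_r d0 (Rmin (eps / (2 * B)) (c * z * (1 - a) / 4))); pose proof (Rmin_r (eps / (2 * B)) (c * z * (1 - a) / 4)); unfold d; lra).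
    assert (Hd : 0 < d).
    { unfold d. apply Rmin_case; [lra|]. apply Rmin_case; [apply Rdiv_lt_0_compat; lra|].
      apply Rdiv_lt_0_compat; [|lra]. apply Rmult_lt_0_compat; [nra|lra]. }
    destruct (Hev d ltac:(lra)) as [K1' HK1'].
    assert (He2 : is_lim_seq (fun k => L * (rb k / u0 k) ^ 2 - 2) (L * z ^ 2 - 2)).
    { apply (is_lim_seq_continuous (fun x => L * x ^ 2 - 2)); auto.
      apply cpt_of_ex_derive. auto_derive. auto. }
    replace (L * z ^ 2 - 2) with 0 in He2 by (rewrite Hz2; field; lra).
    destruct (seq_lim_elim _ _ He2 (eps / 2) ltac:(lra)) as [K2' HK2'].
    destruct (seq_lim_elim _ _ Hrho (Rmin 1 (z / 2)) ltac:(apply Rmin_case; lra)) as [K3' HK3'].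
    exists (Nat.max K1' (Nat.max K2' K3')). intros k Hk y Hy.
    destruct (HK1' k ltac:(lia)) as [HC1 HC2].
    specialize (HK2' k ltac:(lia)). specialize (HK3' k ltac:(lia)).
    rewrite Rminus_0_r in HK2'.
    pose proof (Rmin_l 1 (z / 2)). pose proof (Rmin_r 1 (z / 2)).
    apply Rabs_def2 in HK3'.
    set (rho := rb k / u0 k) in *.
    assert (Hrho1 : z / 2 <= rho) by lra.
    assert (Hrho2 : rho <= z + 1) by lra.
    assert (Hder : forall x, - rb k < x < rb k -> ex_derive (u k) x /\ ex_derive (Derive (u k)) x).
    { intros x Hx. destruct (Hu k) as [_ [_ [Hode _]]]. destruct (Hode x Hx) as [_ [? [? _]]]. auto. }
    assert (Hy1 : -1 < y < 1) by (apply Rabs_le_between in Hy; lra).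
    assert (Hcond : rb k * Rabs y + d * u0 k / c <= rb k).
    { assert (Hrk : rb k = rho * u0 k) by (unfold rho; field; pose proof (Hs k); lra).
      rewrite Hrk. pose proof (Hs k).
      assert (d / c <= rho * (1 - a)).
      { apply (Rmult_le_reg_r c); auto. replace (d / c * c) with d by (field; lra).
        assert (c * z * (1 - a) / 4 <= rho * (1 - a) * c) by nra. lra. }
      assert (rho * Rabs y <= rho * a) by (apply Rmult_le_compat_l; lra).
      replace (d * u0 k / c) with (d / c * u0 k) by (field; lra). nra. }
    pose proof (C2_one (u k) (u0 k) (rb k) L d c y j (Hs k) (Hr k) Hc Hd HL Hder HC1 HC2 Hy1 Hcond Hj) as Hfin.
    fold rho in Hfin.
    assert (d * rho ^ 2 <= eps / 2).
    { assert (rho ^ 2 <= B) by (unfold B; apply pow_incr; lra).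
      apply Rle_trans with (d * B); [apply Rmult_le_compat_l; lra|].
      apply (Rmult_le_compat_r B) in Hd2; [|lra].
      replace (eps / (2 * B) * B) with (eps / 2) in Hd2 by (field; lra). lra. }
    lra.
Qed.
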